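(* Let $T$ be a permutation tableau, and let $P$ be an alternating path of $T$ with label sequence $p_1p_2\cdots p_r$. Here $p_1$ is the label of the starting dot and $p_r$ is the label of the final black dot. Then $p_1,p_2,\ldots,p_r$ occur in the permutation $\xi(T)$ in this left-to-right order, i.e. $p_1p_2\cdots p_r$ is a subsequence of $\xi(T)$.
   Context: Permutation tableaux. Draw a Ferrers diagram in English convention: rows are left-justified, row lengths weakly decrease from top to bottom, and every column is nonempty. Rows of length zero are allowed. A permutation tableau $T$ is a filling of the cells of such a diagram with 0's and 1's satisfying two conditions: (i) every column contains at least one 1; (ii) no cell containing 0 has both a 1 above it in its column and a 1 to its left in its row. Its length $n$ is the number of rows plus the number of columns. Labels. The southeast boundary path of $n$ unit south/west steps, from the top-right corner to the bottom-left corner, has its steps labeled $1,\ldots,n$ in order. Each row gets the label of its south step, and each column the label of its west step. $(i,j)$ denotes the cell in row $i$ and column $j$. Zeros, ones and rows. A 1 is topmost if there is no 1 above it in its column. A 0 is restricted if there is a 1 above it in its column. A rightmost restricted 0 is a restricted 0 with no restricted 0 to its right in its row. A row is unrestricted if it contains no restricted 0; empty rows are unrestricted. Dots. Black dots are placed on the topmost 1's (one per column), each labeled by its column label. White dots are placed on the rightmost restricted 0's (one per restricted row), each labeled by its row label. Alternating paths. An alternating path is a sequence of dots, identified with the sequence of their labels, built as follows. - From a white dot in cell $(i,j)$, the next dot is the black dot of column $j$. - From a black dot in cell $(i,j)$: if row $i$ is unrestricted, the path ends; otherwise the next dot is the white dot of row $i$. The bijection $\xi$. Start with the labels of the unrestricted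 rows in increasing order. Then process the column labels in decreasing order. For a column $j$: 1. If its black dot is in cell $(i,j)$, insert $j$ immediately to the left of $i$. 2. If column $j$ has white dots in rows $i_1<\cdots<i_k$, insert $i_1\cdots i_k$, in increasing order, immediately to the left of $j$. The result is the permutation $\xi(T)$ of $[n]$. *)

(* Defs.v *)
From mathcomp Require Import all_boot.
Set Implicit Arguments. Unset Strict Implicit. Unset Printing Implicit Defensive.

(* Steps of the southeast boundary path are labelled 1..n; [isrow i] says that
   step i is a south step (so i labels a row); otherwise it is a west step and
   labels a column.  Cell (i,j) exists iff i is a row label, j a column label
   and i < j (row i has as length the number of west steps after it).
   Inside column j, "above" means smaller row label; inside row i, "to the
   left" means larger column label.  [fill i j] is the entry of cell (i,j)
   (true = 1, false = 0); values outside cells are irrelevant. *)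
Record tableau := Tableau {
  tn : nat;
  isrow : nat -> bool;
  fill : nat -> nat -> bool }.

Section Defs.
Variable T : tableau.

Definition rowlab (i : nat) : bool := [&& 0 < i, i <= tn T & isrow T i].
Definition collab (j : nat) : bool := [&& 0 < j, j <= tn T & ~~ isrow T j].
Definition cell (i j : nat) : bool := [&& rowlab i, collab j & i < j].
Definition one (i j : nat) : bool := cell i j && fill T i j.
Definition zero (i j : nat) : bool := cell i j && ~~ fill T i j.

Definition ferrers : Prop := forall j, collab j -> exists i, cell i j.

Definition perm_tableau : Prop :=
  [/\ ferrers,
      (forall j, collab j -> exists i, one i j) &
      (forall i j, zero i j ->
         ~ ((exists i', i' < i /\ one i' j) /\ (exists j', j < j' /\ one i j')))].

Definition restricted (i j : nat) : bool :=
  zero i j && has (fun i' => one i' j) (iota 0 i).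
Definition restricted_row (i : nat) : bool :=
  has (restricted i) (iota 0 (tn T).+1).
Definition unrestricted_row (i : nat) : bool := rowlab i && ~~ restricted_row i.

(* row of the topmost 1 of column j (the black dot of column j) *)
Definition top (j : nat) : nat :=
  head 0 [seq i <- iota 0 (tn T).+1 | one i j].
(* column of the rightmost restricted 0 of row i (the white dot of row i) *)
Definition wcol (i : nat) : nat :=
  head 0 [seq j <- iota 0 (tn T).+1 | restricted i j].

(* dots, identified with their labels: black dots carry column labels,
   white dots carry labels of restricted rows *)
Definition is_dot (x : nat) : bool := collab x || (rowlab x && restricted_row x).

Definition alt_step (a b : nat) : bool :=
  if collab a then restricted_row (top a) && (b == top a)
  else b == wcol a.

Definition alt_path (p : seq nat) : Prop :=
  match p with
  | [::] => False
  | x :: q => [/\ is_dot x, path alt_step x q,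
                 collab (last x q) & ~~ restricted_row (top (last x q))]
  end.

Definition ins_before (w : seq nat) (y : nat) (s : seq nat) : seq nat :=
  let k := index y s in take k s ++ w ++ drop k s.

Definition whites (j : nat) : seq nat :=
  [seq i <- iota 0 (tn T).+1 | rowlab i && restricted_row i && (wcol i == j)].

Definition xi_step (s : seq nat) (j : nat) : seq nat :=
  ins_before (whites j) j (ins_before [:: j] (top j) s).

Definition xi : seq nat :=
  foldl xi_step [seq i <- iota 0 (tn T).+1 | unrestricted_row i]
        [seq j <- rev (iota 0 (tn T).+1) | collab j].

End Defs.

(* Main.v *)
Require Import Defs.
From mathcomp Require Import all_boot.
Set Implicit Arguments. Unset Strict Implicit. Unset Printing Implicit Defensive.

Lemma head_filter_has (P : pred nat) l d : has P l -> P (head d (filter P l)).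
Proof. elim: l => //= a l IH; case Pa: (P a) => /= H; [exact: Pa | exact: IH]. Qed.

Lemma perm_ins w y (s : seq nat) : perm_eq (ins_before w y s) (w ++ s).
Proof. by rewrite /ins_before perm_catCA cat_take_drop. Qed.

Lemma subseq_ins w y (s : seq nat) : subseq s (ins_before w y s).
Proof.
rewrite /ins_before; set k := index y s.
rewrite -{1}(cat_take_drop k s); apply: cat_subseq; [exact: subseq_refl | exact: suffix_subseq].
Qed.

Lemma subseq_ins_at w y (s : seq nat) : y \in s -> subseq (w ++ [:: y]) (ins_before w y s).
Proof.
move=> ys; rewrite /ins_before (drop_nth y) ?index_mem // nth_index //.
apply: (subseq_trans _ (suffix_subseq _ _)).
apply: cat_subseq; first exact: subseq_refl.
by rewrite sub1seq mem_head.
Qed.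

Lemma rowcol T x : rowlab T x -> ~~ collab T x.
Proof. by rewrite /rowlab /collab => /and3P [_ _ ->]; rewrite !andbF. Qed.

Lemma mem_whites T j x : (x \in whites T j) = [&& rowlab T x, restricted_row T x & wcol T x == j].
Proof.
rewrite mem_filter mem_iota add0n ltnS leq0n andTb -!andbA.
by case: (x <= tn T); rewrite ?andbT ?andbF.
Qed.

Lemma mem_step T s j x : (x \in xi_step T s j) = [|| x \in whites T j, x == j | x \in s].
Proof.
rewrite /xi_step (perm_mem (perm_ins _ _ _)) mem_cat (perm_mem (perm_ins _ _ _)).
by rewrite mem_cat mem_seq1.
Qed.

Lemma uniq_step T s j : uniq (xi_step T s j) = uniq (whites T j ++ j :: s).
Proof.
rewrite /xi_step (perm_uniq (perm_ins _ _ _)); apply: perm_uniq.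
by apply: perm_cat => //; exact: perm_ins.
Qed.

Lemma taut (A B C D E F G : bool) :
  [|| [&& A, B & C], D | [|| E, F | [&& A, B & G]]] = [|| E, D || F | [&& A, B & C || G]].
Proof. by case: A; case: B; case: C; case: D; case: E; case: F; case: G. Qed.

Definition initl T := [seq i <- iota 0 (tn T).+1 | unrestricted_row T i].

Lemma inv T pre : uniq pre -> all (collab T) pre ->
  uniq (foldl (xi_step T) (initl T) pre) /\
  forall x, (x \in foldl (xi_step T) (initl T) pre) =
     [|| unrestricted_row T x, x \in pre | [&& rowlab T x, restricted_row T x & wcol T x \in pre]].
Proof.
elim/last_ind: pre => [|pre j IH].
  move=> _ _; split; first by rewrite filter_uniq // iota_uniq.
  move=> x; rewrite mem_filter mem_iota /= add0n ltnS in_nil !andbF orbF.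
  case U: (unrestricted_row T x) => //=.
  by move: U; rewrite /unrestricted_row /rowlab => /andP [/and3P [_ -> _] _].
rewrite rcons_uniq all_rcons => /andP [jn upre] /andP [cj apre].
have [U M] := IH upre apre.
rewrite foldl_rcons; split.
  rewrite uniq_step cat_uniq filter_uniq ?iota_uniq //= U andbT.
  rewrite negb_or; apply/andP; split; first (apply/andP; split).
  - by rewrite mem_whites; apply/negP => /and3P [r _ _]; move: (rowcol r); rewrite cj.
  - apply/hasPn => y ys; rewrite mem_whites.
    apply/negP => /and3P [r rr /eqP wj]; move: ys; rewrite M wj (negbTE jn) /=.
    rewrite /unrestricted_row rr !andbF /= orbF.
    by move=> yp; move: (allP apre y yp) (rowcol r) => ->.
  rewrite M (negbTE jn) /= /unrestricted_row.
  by case R: (rowlab T j) => //; move: (rowcol R); rewrite cj.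
move=> x; rewrite mem_step M mem_whites !mem_rcons !inE.
exact: taut.
Qed.

Lemma F1 T j : perm_tableau T -> collab T j -> Defs.one T (top T j) j && rowlab T (top T j).
Proof.
case=> _ H2 _ cj; have [i oi] := H2 j cj.
have o : Defs.one T (top T j) j.
  rewrite /top.
  apply: (@head_filter_has (fun i0 => Defs.one T i0 j) (iota 0 (tn T).+1) 0).
  apply/hasP; exists i => //; rewrite mem_iota add0n ltnS leq0n /=.
  by move: oi; rewrite /Defs.one /cell /rowlab => /andP [/and3P [/and3P [_ -> _] _ _] _].
by rewrite o /=; move: o; rewrite /Defs.one /cell => /andP [/and3P [-> _ _] _].
Qed.

Lemma F2 T i : restricted_row T i -> restricted T i (wcol T i) && collab T (wcol T i).
Proof.
move=> rr; have r : restricted T i (wcol T i) by apply: head_filter_has.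
by rewrite r /=; move: r; rewrite /restricted /zero /cell => /andP [/andP [/and3P [_ -> _] _] _].
Qed.

Lemma F3 T j : perm_tableau T -> collab T j -> restricted_row T (top T j) -> j < wcol T (top T j).
Proof.
move=> PT cj rr; have /andP [oi ri] := F1 PT cj.
have /andP [rk _] := F2 rr.
move: oi rk; set i := top T j; set k := wcol T i => oi rk.
case: PT => _ _ H3.
move: rk; rewrite /restricted => /andP [zk /hasP [i' i'in oi']].
rewrite ltnNge leq_eqVlt; apply/negP => /orP [/eqP kj | kj].
  by move: zk oi; rewrite /zero /Defs.one kj => /andP [_ /negbTE ->]; rewrite andbF.
apply: (H3 i k zk); split; last by exists j.
by exists i'; rewrite mem_iota add0n in i'in; case/andP: i'in.
Qed.

Definition Lcols T := [seq j <- rev (iota 0 (tn T).+1) | collab T j].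

Lemma splitL T j : collab T j ->
  Lcols T = [seq k <- rev (iota j.+1 (tn T - j)) | collab T k] ++
            j :: [seq k <- rev (iota 0 j) | collab T k].
Proof.
move=> cj; have jn : j <= tn T by case/and3P: cj.
rewrite /Lcols.
have -> : (tn T).+1 = j + (tn T - j).+1 by rewrite addnS subnKC.
rewrite iotaD add0n /= rev_cat rev_cons cat_rcons filter_cat /= cj.
by [].
Qed.

Lemma foldl_subseq T s l : subseq s (foldl (xi_step T) s l).
Proof.
elim: l s => [|a l IH] s /=; first exact: subseq_refl.
apply: subseq_trans (IH _).
exact: subseq_trans (subseq_ins _ _ _) (subseq_ins _ _ _).
Qed.

Lemma L1_ok T j : uniq [seq k <- rev (iota j.+1 (tn T - j)) | collab T k] /\
                  all (collab T) [seq k <- rev (iota j.+1 (tn T - j)) | collab T k].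
Proof. by split; [rewrite filter_uniq // rev_uniq iota_uniq | exact: filter_all]. Qed.

Lemma pair_black T j : perm_tableau T -> collab T j -> restricted_row T (top T j) ->
  subseq [:: j; top T j] (xi T).
Proof.
move=> PT cj rr.
have /andP [oi ri] := F1 PT cj.
have /andP [_ ck] := F2 rr.
have jk := F3 PT cj rr.
have -> : xi T = foldl (xi_step T) (initl T) (Lcols T) by [].
rewrite (splitL cj) foldl_cat /=.
have [u a] := L1_ok T j.
have [_ M] := inv u a.
set s0 := foldl _ _ _.
apply: subseq_trans (foldl_subseq _ _ _).
apply: subseq_trans (subseq_ins _ _ _).
apply: (subseq_ins_at [:: j]).
have jn : j <= tn T by case/and3P: cj.
have kt : wcol T (top T j) < j.+1 + (tn T - j).
  by rewrite addSn subnKC // ltnS; case/and3P: ck.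
rewrite M ri rr /= [X in [|| _, _ | X]]mem_filter ck mem_rev mem_iota jk kt.
by rewrite !orbT.
Qed.

Lemma pair_white T i : rowlab T i -> restricted_row T i ->
  subseq [:: i; wcol T i] (xi T).
Proof.
move=> ri rr.
have /andP [_ cj] := F2 rr.
move: cj; set j := wcol T i => cj.
have -> : xi T = foldl (xi_step T) (initl T) (Lcols T) by [].
rewrite (splitL cj) foldl_cat /=.
apply: subseq_trans (foldl_subseq _ _ _).
rewrite /xi_step.
set s1 := ins_before [:: j] _ _.
have js1 : j \in s1 by rewrite (perm_mem (perm_ins _ _ _)) mem_head.
apply: subseq_trans (subseq_ins_at _ js1).
rewrite -[[:: i; j]]/([:: i] ++ [:: j]).
apply: cat_subseq; last exact: subseq_refl.
by rewrite sub1seq mem_whites ri rr eqxx.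
Qed.

Lemma dot_step T a b : perm_tableau T -> is_dot T a -> alt_step T a b ->
  is_dot T b && subseq [:: a; b] (xi T).
Proof.
move=> PT; rewrite /alt_step /is_dot; case ca: (collab T a) => /=.
  move=> _ /andP [rr /eqP ->]; have /andP [_ ri] := F1 PT ca.
  by rewrite ri rr orbT pair_black.
move=> /andP [ri rr] /eqP ->; have /andP [_ ck] := F2 rr.
by rewrite ck pair_white.
Qed.

Lemma xi_inv T : uniq (xi T) /\ forall x, (x \in xi T) =
     [|| unrestricted_row T x, x \in Lcols T | [&& rowlab T x, restricted_row T x & wcol T x \in Lcols T]].
Proof.
by apply: inv; [rewrite filter_uniq // rev_uniq iota_uniq | exact: filter_all].
Qed.

Lemma in_Lcols T x : collab T x -> x \in Lcols T.
Proof.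
move=> cx; rewrite mem_filter cx mem_rev mem_iota add0n ltnS /=.
by case/and3P: cx.
Qed.

Lemma dot_in T x : is_dot T x -> x \in xi T.
Proof.
have [_ M] := xi_inv T; rewrite M /is_dot => /orP [cx | /andP [rx rr]].
  by apply/or3P; apply: Or32; apply: in_Lcols.
have /andP [_ ck] := F2 rr; apply/or3P; apply: Or33.
by rewrite rx rr in_Lcols.
Qed.

Lemma path_walk T x q : perm_tableau T -> is_dot T x -> path (alt_step T) x q ->
  path (fun a b => subseq [:: a; b] (xi T)) x q.
Proof.
move=> PT; elim: q x => [|y q IH] x //= dx /andP [st pq].
have /andP [dy sxy] := dot_step PT dx st.
by rewrite sxy IH.
Qed.

Lemma sub2_neq (c a b : nat) s : uniq (c :: s) -> subseq [:: a; b] (c :: s) -> b != c.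
Proof.
case/andP=> cn _ /=; case: (a == c) => H.
  by apply/eqP => bc; move: H cn; rewrite sub1seq bc => ->.
apply/eqP => bc; have := mem_subseq H (x:=b); rewrite ?inE ?eqxx ?orbT => /(_ isT).
rewrite bc.
by move=> cs; move: cn; rewrite cs.
Qed.

Lemma path_drop (c : nat) s x q : uniq (c :: s) -> x != c ->
  path (fun a b => subseq [:: a; b] (c :: s)) x q ->
  path (fun a b => subseq [:: a; b] s) x q.
Proof.
move=> U; elim: q x => [|y q IH] x //= xc /andP [sxy pq].
have yc := sub2_neq U sxy.
move: sxy; rewrite /= (negbTE xc) => sxy.
by rewrite sxy IH.
Qed.

Lemma chain (s : seq nat) x q : uniq s -> x \in s ->
  path (fun a b => subseq [:: a; b] s) x q -> subseq (x :: q) s.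
Proof.
elim: s x q => [|c s IH] x q U; first by rewrite in_nil.
have U' := U; case/andP: U' => cn us.
rewrite inE; case: (eqVneq x c) => [-> _ | xc xs] P.
  rewrite /= eqxx; case: q P => [|y q]; first by rewrite sub0seq.
  move=> /= /andP [scy pq].
  have yc := sub2_neq U scy.
  move: scy; rewrite /= eqxx sub1seq => ys.
  by apply: IH => //; apply: path_drop U yc pq.
rewrite /= (negbTE xc); apply: IH => //.
exact: path_drop U xc P.
Qed.

Theorem lemma2p4 (T : tableau) (p : seq nat) :
  perm_tableau T -> alt_path T p -> subseq p (xi T).
Proof.
move=> PT; case: p => [|x q] //= [dx pq _ _].
have [U _] := xi_inv T.
apply: chain => //; first exact: dot_in.
exact: path_walk.
Qed.
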